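(* Let $0<s_1<s_2$, $0<\epsilon<\min(s_1,s_2-s_1)$ and $M>\epsilon$ satisfy \[ \frac{2}{s_2+\epsilon}+\frac{1}{2s_2+\epsilon}+\frac{1}{2s_1+\epsilon}>\frac{\sqrt3}{s_1-\epsilon}+\frac1{s_1}+\frac1{M-\epsilon}. \] Let $(r_1,r_2,r_3)\in(0,\epsilon)\times(s_2-\epsilon,s_2)\times(s_2,s_2+\epsilon)$ and $(\ell_1,\ell_2,\ell_3)\in(s_1-\epsilon,s_1)\times(s_1,s_1+\epsilon)\times(M,\infty)$, and suppose $r_3\ge\varphi(r_1,r_2)$ and $\ell_3\ge\varphi(\ell_1,\ell_2)$. Then \[ c(r_1,r_2,r_3)+c(\ell_1,\ell_2,\ell_3)>c(\ell_1,r_2,r_3)+c(r_1,\ell_2,\ell_3). \]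
   Context: For $r_1,r_2,r_3\ge 0$ and $(\alpha,\beta)\in\mathbb T^2$ let \[C(r_1,r_2,r_3,\alpha,\beta)=\frac{1}{\sqrt{r_1^2+r_2^2-2r_1r_2\cos\alpha}}+\frac{1}{\sqrt{r_1^2+r_3^2-2r_1r_3\cos\beta}}+\frac{1}{\sqrt{r_2^2+r_3^2-2r_2r_3\cos(\alpha-\beta)}}\] (value $+\infty$ if a denominator vanishes), and let the radial cost be $c(r_1,r_2,r_3)=\min_{(\alpha,\beta)\in\mathbb T^2}C(r_1,r_2,r_3,\alpha,\beta)$. For $0<r_1<r_2$, $\varphi(r_1,r_2)=\dfrac{5r_1r_2+r_2^2+(r_1+r_2)\sqrt{r_2^2+12r_1r_2-4r_1^2}}{2(r_2-r_1)}$; the condition $r_3\ge\varphi(r_1,r_2)$ (for $r_3>0$) is equivalent to $r_2(r_3-r_1)^3-r_1(r_3+r_2)^3-r_3(r_1+r_2)^3\ge0$. *)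

(* Defs.v *)
From HB Require Import structures.
From mathcomp Require Import all_boot all_order all_algebra.
From mathcomp Require Import all_classical all_reals all_analysis.
Set Implicit Arguments. Unset Strict Implicit. Unset Printing Implicit Defensive.
Import Order.TTheory GRing.Theory Num.Theory.
Local Open Scope classical_set_scope.
Local Open Scope ring_scope.

Definition pairterm {R : realType} (a b t : R) : \bar R :=
  let d := Num.sqrt (a ^+ 2 + b ^+ 2 - 2 * a * b * cos t) in
  if d == 0 then +oo%E else (d^-1)%:E.

(* C(r1,r2,r3,alpha,beta); angles taken in R (all terms are 2pi-periodic,
   so this is a function on the torus T^2 = (R/2piZ)^2). *)
Definition Ccost {R : realType} (r1 r2 r3 alpha beta : R) : \bar R :=
  (pairterm r1 r2 alpha + pairterm r1 r3 beta + pairterm r2 r3 (alpha - beta))%E.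

(* radial cost c(r1,r2,r3) = min over the torus of C (as an infimum in \bar R;
   the minimum is attained) *)
Definition ccost {R : realType} (r1 r2 r3 : R) : \bar R :=
  ereal_inf [set Ccost r1 r2 r3 ab.1 ab.2 | ab in [set: R * R]].

Definition phi {R : realType} (r1 r2 : R) : R :=
  (5 * r1 * r2 + r2 ^+ 2 + (r1 + r2) * Num.sqrt (r2 ^+ 2 + 12 * r1 * r2 - 4 * r1 ^+ 2))
  / (2 * (r2 - r1)).

(* Main.v *)
Require Import Defs.
From HB Require Import structures.
From mathcomp Require Import all_boot all_order all_algebra.
From mathcomp Require Import all_classical all_reals all_analysis.
From mathcomp Require Import ring lra.
Import Order.TTheory GRing.Theory Num.Theory.
Local Open Scope ring_scope.

Lemma inv_le (R : realFieldType) (a b : R) : 0 < a -> a <= b -> b^-1 <= a^-1.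
Proof. by move=> a0 ab; rewrite lef_pV2 ?posrE // (lt_le_trans a0 ab). Qed.

Lemma inv_sum4 (R : realFieldType) (x y : R) : 0 < x -> 0 < y ->
  4 / (x + y) <= x^-1 + y^-1.
Proof.
move=> x0 y0; rewrite -subr_ge0.
have -> : x^-1 + y^-1 - 4 / (x + y) = (x - y)^+2 / (x * y * (x + y)).
  have nx : x != 0 by rewrite gt_eqF.
  have ny : y != 0 by rewrite gt_eqF.
  have nxy : x + y != 0 by rewrite gt_eqF // addr_gt0.
  by field; rewrite nx ny nxy.
apply: divr_ge0; first exact: sqr_ge0.
apply: mulr_ge0; [apply: mulr_ge0|]; lra.
Qed.

Lemma polyP (R : realFieldType) (s e : R) : 0 < e -> 16 * e < s ->
  (s^+2 + 5*s*e + 3*e^+2)^+2 * (3*s^+2 + 5*s*e + 7/4*e^+2) <=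
  ((s+e)*(2*s+e)*(s+2*e))^+2.
Proof.
move=> e0 hs.
set d := s - 16 * e.
have d0 : 0 <= d by rewrite /d; lra.
have -> : s = 16 * e + d by rewrite /d; ring.
have e0' : 0 <= e by lra.
have h0 : 0 <= e^+0 * d^+6 by apply: mulr_ge0; apply: exprn_ge0.
have h1 : 0 <= e^+1 * d^+5 by apply: mulr_ge0; apply: exprn_ge0.
have h2 : 0 <= e^+2 * d^+4 by apply: mulr_ge0; apply: exprn_ge0.
have h3 : 0 <= e^+3 * d^+3 by apply: mulr_ge0; apply: exprn_ge0.
have h4 : 0 <= e^+4 * d^+2 by apply: mulr_ge0; apply: exprn_ge0.
have h5 : 0 <= e^+5 * d^+1 by apply: mulr_ge0; apply: exprn_ge0.
have h6 : 0 <= e^+6 * d^+0 by apply: mulr_ge0; apply: exprn_ge0.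
lra.
Qed.

Lemma sq_le (R : realFieldType) (x a : R) : 0 <= x -> 0 <= a -> x^+2 <= a^+2 -> x <= a.
Proof. move=> x0 a0 h; nra. Qed.

Lemma dist_le (R : realFieldType) (a b c x : R) : 0 <= a -> 0 <= b -> -1 <= c -> 0 <= x ->
  x^+2 = a^+2 + b^+2 - 2*a*b*c -> x <= a + b.
Proof.
move=> a0 b0 c1 x0 hx; apply: sq_le => //; first lra.
have : 0 <= a * b * (c + 1) by apply: mulr_ge0; [apply: mulr_ge0|]; lra.
rewrite hx; nra.
Qed.

Lemma core (R : realFieldType) (s e r1 r2 r3 ca sa cb sb x y z : R) :
  0 < e -> 16 * e < s -> 0 < r1 -> r1 < e -> s - e < r2 -> r2 < s ->
  s < r3 -> r3 < s + e ->
  ca^+2 + sa^+2 = 1 -> cb^+2 + sb^+2 = 1 -> 0 < x -> 0 < y -> 0 < z ->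
  x^+2 = r1^+2 + r2^+2 - 2*r1*r2*ca -> y^+2 = r1^+2 + r3^+2 - 2*r1*r3*cb ->
  z^+2 = r2^+2 + r3^+2 - 2*r2*r3*(ca*cb + sa*sb) ->
  2 * (s + e)^-1 + (2 * s + e)^-1 <= x^-1 + y^-1 + z^-1.
Proof.
move=> e0 es r10 r1e r2l r2u r3l r3u hca hcb x0 y0 z0 hx hy hz.
have ca1 : -1 <= ca by nra.
have cb1 : -1 <= cb by nra.
have cab : -1 <= ca * cb + sa * sb.
  have : (ca * cb + sa * sb)^+2 + (ca * sb - sa * cb)^+2 = 1.
    by rewrite -[1]mulr1 -{1}hca -hcb; ring.
  set w := ca * cb + sa * sb; set q := ca * sb - sa * cb.
  move=> hwq.
  have : w^+2 <= 1 by have := sqr_ge0 q; lra.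
  nra.
have xb : x <= r1 + r2 by apply: (@dist_le _ r1 r2 ca x) => //; lra.
have yb : y <= r1 + r3 by apply: (@dist_le _ r1 r3 cb y) => //; lra.
have zb : z <= r2 + r3 by apply: (@dist_le _ r2 r3 (ca * cb + sa * sb) z) => //; lra.
have iz : (2 * s + e)^-1 <= z^-1 by apply: inv_le => //; lra.
case: (lerP (- (s - e / 2)) (r2 * ca + r3 * cb)) => hu.
- have hxy : x + y <= 2 * (s + e) by nra.
  have h4 := @inv_sum4 _ x y x0 y0.
  have h5 : 4 / (2 * (s + e)) <= 4 / (x + y).
    by rewrite ler_pM2l //; apply: inv_le => //; lra.
  have h6 : 4 / (2 * (s + e)) = 2 * (s + e)^-1.
    have : s + e != 0 by rewrite gt_eqF //; lra.
    by move=> ?; field.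
  lra.
- have hz2 : z^+2 <= 3 * s^+2 + 5 * s * e + 7/4 * e^+2.
    have iden : z^+2 = 2 * (r2^+2 + r3^+2) - (r2 * ca + r3 * cb)^+2
                 - (r2 * sa + r3 * sb)^+2.
      apply/eqP; rewrite -subr_eq0; apply/eqP.
      have -> : z ^+ 2 - (2 * (r2 ^+ 2 + r3 ^+ 2) - (r2 * ca + r3 * cb) ^+ 2 - (r2 * sa + r3 * sb) ^+ 2)
        = r2^+2 * (ca^+2 + sa^+2 - 1) + r3^+2 * (cb^+2 + sb^+2 - 1) by rewrite hz; ring.
      by rewrite hca hcb !subrr !mulr0 addr0.
    have u2 : (s - e/2)^+2 <= (r2 * ca + r3 * cb)^+2.
      rewrite -[X in _ <= X]sqrrN; apply: lerXn2r; rewrite ?nnegrE; lra.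
    have r22 : r2^+2 <= s^+2 by apply: lerXn2r; rewrite ?nnegrE; lra.
    have r32 : r3^+2 <= (s+e)^+2 by apply: lerXn2r; rewrite ?nnegrE; lra.
    have := sqr_ge0 (r2 * sa + r3 * sb).
    rewrite iden; lra.
  set g := (s^+2 + 5*s*e + 3*e^+2) / ((s+e)*(2*s+e)*(s+2*e)).
  have s0 : 0 < s by lra.
  have den0 : 0 < (s+e)*(2*s+e)*(s+2*e).
    by apply: mulr_gt0; [apply: mulr_gt0|]; lra.
  have g0 : 0 <= g by apply: divr_ge0 => //; [nra | lra].
  have gz : g * z <= 1.
    have P := @polyP _ s e e0 es.
    have : (g * z)^+2 <= 1.
      rewrite exprMn.
      apply: (le_trans (y := g^+2 * (3 * s^+2 + 5 * s * e + 7/4 * e^+2))).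
        by apply: ler_wpM2l => //; apply: sqr_ge0.
      rewrite /g expr_div_n mulrAC ler_pdivrMr ?mul1r //.
      by apply: exprn_gt0.
    have : 0 <= g * z by apply: mulr_ge0 => //; lra.
    nra.
  have gi : g <= z^-1 by rewrite -div1r ler_pdivlMr.
  have ix : (s + e)^-1 <= x^-1 by apply: inv_le => //; lra.
  have iy : (s + 2 * e)^-1 <= y^-1 by apply: inv_le => //; lra.
  have idt : (s + e)^-1 + (s + 2 * e)^-1 + g = 2 * (s + e)^-1 + (2 * s + e)^-1.
    rewrite /g.
    have n1 : s + e != 0 by rewrite gt_eqF //; lra.
    have n2 : s + 2 * e != 0 by rewrite gt_eqF //; lra.
    have n3 : 2 * s + e != 0 by rewrite gt_eqF //; lra.
    by field; rewrite n1 n2 n3.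
  lra.
Qed.

Section Ana.
Variable R : realType.

Lemma pt_sq (a b t c : R) : a^+2 + b^+2 - 2*a*b*cos t = c^+2 -> 0 < c ->
  pairterm a b t = (c^-1)%:E.
Proof.
by move=> h c0; rewrite /pairterm /= h sqrtr_sqr gtr0_norm // gt_eqF.
Qed.

Lemma pt_lb (a b t : R) : 0 <= a -> 0 <= b -> 0 < a + b ->
  (((a + b)^-1)%:E <= pairterm a b t)%E.
Proof.
move=> a0 b0 ab0; rewrite /pairterm /=; case: ifP => [_|/negbT hd].
  exact: leey.
rewrite lee_fin; apply: inv_le.
  by rewrite lt_neqAle eq_sym hd sqrtr_ge0.
rewrite -(ger0_norm (ltW ab0)) -sqrtr_sqr ler_sqrt; last exact: sqr_ge0.
have := cos_geN1 t.
have : 0 <= a * b by apply: mulr_ge0.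
nra.
Qed.

Lemma pt_val (a b t : R) : 0 <= a * b -> 0 < (a - b)^+2 ->
  [/\ pairterm a b t = ((Num.sqrt (a^+2 + b^+2 - 2*a*b*cos t))^-1)%:E,
      0 < Num.sqrt (a^+2 + b^+2 - 2*a*b*cos t) &
      (Num.sqrt (a^+2 + b^+2 - 2*a*b*cos t))^+2 = a^+2 + b^+2 - 2*a*b*cos t].
Proof.
move=> ab0 d0; set x := Num.sqrt _.
have e0 : 0 < a^+2 + b^+2 - 2*a*b*cos t.
  have := cos_le1 t; nra.
have x0 : 0 < x by rewrite /x sqrtr_gt0.
split => //; last by rewrite /x sqr_sqrtr // ltW.
by rewrite /pairterm /= -/x gt_eqF.
Qed.

Lemma inv_lt (a b : R) : 0 < a -> a < b -> b^-1 < a^-1.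
Proof. by move=> a0 ab; rewrite ltf_pV2 ?posrE // (lt_trans a0 ab). Qed.

Lemma pt_ub3 (a b t m : R) : 0 < m -> m <= a -> m <= b -> cos t = -1/2 ->
  (pairterm a b t <= ((Num.sqrt 3 * m)^-1)%:E)%E.
Proof.
move=> m0 ma mb ct.
have e0 : 3 * m^+2 <= a^+2 + b^+2 - 2*a*b*cos t.
  rewrite ct; nra.
have p0 : 0 < 3 * m^+2 by apply: mulr_gt0 => //; apply: exprn_gt0.
have hs : Num.sqrt 3 * m = Num.sqrt (3 * m^+2).
  by rewrite sqrtrM // sqrtr_sqr gtr0_norm.
have x0 : 0 < Num.sqrt (a^+2 + b^+2 - 2*a*b*cos t).
  by rewrite sqrtr_gt0; apply: lt_le_trans p0 e0.
rewrite /pairterm /= gt_eqF // lee_fin; apply: inv_le.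
  by rewrite hs sqrtr_gt0.
by rewrite hs ler_sqrt //; apply: le_trans (ltW p0) e0.
Qed.

End Ana.

Theorem lemma3p3 (R : realType) (s1 s2 eps M r1 r2 r3 l1 l2 l3 : R) :
  0 < s1 -> s1 < s2 ->
  0 < eps -> eps < Num.min s1 (s2 - s1) ->
  eps < M ->
  2 / (s2 + eps) + 1 / (2 * s2 + eps) + 1 / (2 * s1 + eps) >
    Num.sqrt 3 / (s1 - eps) + 1 / s1 + 1 / (M - eps) ->
  0 < r1 < eps -> s2 - eps < r2 < s2 -> s2 < r3 < s2 + eps ->
  s1 - eps < l1 < s1 -> s1 < l2 < s1 + eps -> M < l3 ->
  r3 >= phi r1 r2 -> l3 >= phi l1 l2 ->
  (ccost r1 r2 r3 + ccost l1 l2 l3 > ccost l1 r2 r3 + ccost r1 l2 l3)%E.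
Proof.
move=> s10 s12 e0; rewrite lt_min => /andP[es1 es2] eM H.
move=> /andP[r10 r1e] /andP[r2l r2u] /andP[r3l r3u].
move=> /andP[l1l l1u] /andP[l2l l2u] l3M _ _.
rewrite !div1r in H.
set k := Num.sqrt 3 in H *.
have k0 : 0 <= k by apply: sqrtr_ge0.
have k2 : k^+2 = 3 by rewrite /k sqr_sqrtr.
have k173 : 173/100 <= k by nra.
have e16 : 16 * eps < s2.
  rewrite ltNge; apply/negP => hle.
  have s20 : 0 < s2 by lra.
  have i1 : (s2 + eps)^-1 <= s2^-1 by apply: inv_le; lra.
  have i2 : (2 * s2 + eps)^-1 <= (2 * s2)^-1 by apply: inv_le; lra.
  have i3 : (2 * s1 + eps)^-1 <= (2 * s1)^-1 by apply: inv_le; lra.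
  have i4 : 0 <= (M - eps)^-1 by rewrite invr_ge0; lra.
  have i5 : (7/8 * s2)^-1 <= (s1 - eps)^-1 by apply: inv_le; lra.
  have i6 : (15/16 * s2)^-1 <= s1^-1 by apply: inv_le; lra.
  have E1 : (2 * s2)^-1 = 1/2 * s2^-1 by rewrite invfM div1r.
  have E2 : (2 * s1)^-1 = 1/2 * s1^-1 by rewrite invfM div1r.
  have E3 : (7/8 * s2)^-1 = 8/7 * s2^-1 by rewrite invfM invf_div.
  have E4 : (15/16 * s2)^-1 = 16/15 * s2^-1 by rewrite invfM invf_div.
  have ip : 0 < s2^-1 by rewrite invr_gt0.
  have : 173/100 * (8/7 * s2^-1) <= k * (s1 - eps)^-1.
    by apply: ler_pM; lra.
  lra.
have m0 : 0 < s1 - eps by lra.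
have r20 : 0 < r2 by lra.
have r30 : 0 < r3 by lra.
have l10 : 0 < l1 by lra.
have l20 : 0 < l2 by lra.
have l30 : 0 < l3 by lra.
set A := 2 * (s2 + eps)^-1 + (2 * s2 + eps)^-1.
have LA : (A%:E <= ccost r1 r2 r3)%E.
  apply: le_ereal_inf_tmp => _ [[al be] _ <-] /=.
  have d12 : 0 < (r1 - r2)^+2 by nra.
  have d13 : 0 < (r1 - r3)^+2 by nra.
  have d23 : 0 < (r2 - r3)^+2 by nra.
  have [p1 x0 hx] := @pt_val R r1 r2 al (ltW (mulr_gt0 r10 r20)) d12.
  have [p2 y0 hy] := @pt_val R r1 r3 be (ltW (mulr_gt0 r10 r30)) d13.
  have [p3 z0 hz] := @pt_val R r2 r3 (al - be) (ltW (mulr_gt0 r20 r30)) d23.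
  rewrite /Ccost p1 p2 p3 -!EFinD lee_fin.
  rewrite cosB in hz z0 *.
  have ha : cos al ^+ 2 + sin al ^+ 2 = 1 by rewrite sin2cos2; lra.
  have hb : cos be ^+ 2 + sin be ^+ 2 = 1 by rewrite sin2cos2; lra.
  by apply: (@core R s2 eps r1 r2 r3 (cos al) (sin al) (cos be) (sin be)) => //; lra.
set B := (l1 + l2)^-1 + (l1 + l3)^-1 + (l2 + l3)^-1.
have LB : (B%:E <= ccost l1 l2 l3)%E.
  apply: le_ereal_inf_tmp => _ [[al be] _ <-] /=.
  rewrite /Ccost /B !EFinD.
  by apply: leeD; [apply: leeD|]; apply: pt_lb; lra.
set C := (k * (s1 - eps))^-1 + (k * (s1 - eps))^-1 + (k * (s1 - eps))^-1.
have UC : (ccost l1 r2 r3 <= C%:E)%E.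
  set al := acos (-1/2 : R).
  have [_ ca] : 0 <= al <= pi /\ cos al = -1/2.
    by apply: acos_def; apply/andP; split; lra.
  apply: (@le_trans _ _ (Ccost l1 r2 r3 al (- al))).
    by apply: ereal_inf_lbound; exists (al, - al).
  rewrite /Ccost /C !EFinD.
  apply: leeD; [apply: leeD|]; apply: pt_ub3; rewrite ?cosN //; try lra.
  rewrite cosB cosN sinN mulrN -!expr2 sin2cos2 ca; lra.
set D := (r1 + l2)^-1 + (l3 - r1)^-1 + (l2 + l3)^-1.
have UD : (ccost r1 l2 l3 <= D%:E)%E.
  apply: (@le_trans _ _ (Ccost r1 l2 l3 pi 0)).
    by apply: ereal_inf_lbound; exists (pi, 0).
  rewrite /Ccost (@pt_sq R r1 l2 pi (r1 + l2)); last by lra.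
    rewrite (@pt_sq R r1 l3 0 (l3 - r1)); last by lra.
      rewrite (@pt_sq R l2 l3 (pi - 0) (l2 + l3)); last by lra.
        by rewrite /D -!EFinD.
      by rewrite subr0 cospi; ring.
    by rewrite cos0; ring.
  by rewrite cospi; ring.
apply: (le_lt_trans (leeD UC UD)); rewrite -EFinD.
apply: (lt_le_trans _ (leeD LA LB)); rewrite -EFinD lte_fin.
have kn0 : k != 0 by rewrite gt_eqF // -(@ltr_pXn2r _ 2) // ?k2 ?expr0n ?nnegrE //=; lra.
have mn0 : s1 - eps != 0 by rewrite gt_eqF.
have EC : C = k^+2 / (k * (s1 - eps)) by rewrite k2 /C; ring.
have EC' : k^+2 / (k * (s1 - eps)) = k * (s1 - eps)^-1 by field; rewrite kn0 mn0.
have f1 : (2 * s1 + eps)^-1 < (l1 + l2)^-1 by apply: inv_lt; lra.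
have f2 : 0 <= (l1 + l3)^-1 by rewrite invr_ge0; lra.
have f3 : (r1 + l2)^-1 < s1^-1 by apply: inv_lt; lra.
have f4 : (l3 - r1)^-1 < (M - eps)^-1 by apply: inv_lt; lra.
rewrite /A /B /D EC EC'.
lra.
Qed.
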